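(* Assume $K_1\subseteq K_2\subseteq\cdots\subseteq K_n\subseteq\mathbb F_q$ are subfields, $d_i=|K_i|$, $n\ge 2$. Let $\delta\ge 2$, $s\in\{1,\dots,n\}$ with $r:=d_s-\delta+1\ge 1$, and let $d=\sum_{i=1}^k(d_i-1)+\ell$ with $0\le k<n$ and $0<\ell\le d_{k+1}-1$. If $W^{(1)}(\mathcal D^{(\delta,s)}_{\mathcal X}(d))=W^{(1)}(\mathcal C_{\mathcal X}(d))$, then at least one of the following holds: (i) $k+2\le n$ and $d_{k+2}\le d_s$; (ii) $d_s\le d_{k+1}$ and $0\le d_s-(d_{k+1}-\ell)<r$.
   Context: $\mathcal X=K_1\times\cdots\times K_n=\{\boldsymbol\alpha_1,\dots,\boldsymbol\alpha_m\}$ (fixed enumeration), $m=\prod d_i$; $\Psi:\mathbb F_q[X_1,\dots,X_n]\to\mathbb F_q^m$, $f\mapsto(f(\boldsymbol\alpha_1),\dots,f(\boldsymbol\alpha_m))$. For $d\ge 0$, $\mathbb F_q[X_1,\dots,X_n]_{\le d}$ is the space of polynomials of degree at most $d$ together with $0$; the affine cartesian code is $\mathcal C_{\mathcal X}(d)=\Psi(\mathbb F_q[X_1,\dots,X_n]_{\le d})$. $\mathcal P^{(\delta,s)}_d$ is the set of $f\in\mathbb F_q[X_1,\dots,X_n]_{\le d}$ with $\deg_{X_s}f<d_s-\delta+1$, together with $0$, and $\mathcal D^{(\delta,s)}_{\mathcal X}(d)=\Psi(\mathcal P^{(\delta,s)}_d)$. $W^{(1)}(C)$ is the minimum Hamming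 distance of a linear code $C$. *)

(* Defs.v *)
From HB Require Import structures.
From mathcomp Require Import all_boot all_order all_algebra all_field.
From mathcomp Require Import mpoly.
Set Implicit Arguments. Unset Strict Implicit. Unset Printing Implicit Defensive.
Import Order.TTheory GRing.Theory.
Local Open Scope ring_scope.

Definition is_subfield (F : finFieldType) (K : {set F}) : Prop :=
  [/\ (0 : F) \in K, (1 : F) \in K,
      (forall x y, x \in K -> y \in K -> x - y \in K),
      (forall x y, x \in K -> y \in K -> x * y \in K) &
      (forall x, x \in K -> x^-1 \in K)].

Definition grid (F : finFieldType) (n : nat) (K : 'I_n -> {set F})
  : {set {ffun 'I_n -> F}} := [set x : {ffun 'I_n -> F} | [forall i, x i \in K i]].

Definition Psi (F : finFieldType) (n : nat) (K : 'I_n -> {set F})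
  (f : {mpoly F[n]}) : 'rV[F]_#|grid K| :=
  \row_(j < #|grid K|) f.@[(enum_val j : {ffun 'I_n -> F})].

Definition hweight (F : fieldType) (m : nat) (v : 'rV[F]_m) : nat :=
  #|[set j : 'I_m | v 0 j != 0]|.

(* degree in the variable X_s (0 for the zero polynomial) *)
Definition degX (F : ringType) (n : nat) (s : 'I_n) (f : {mpoly F[n]}) : nat :=
  \max_(m <- msupp f) m s.

(* F[X]_{<= d}: polynomials of total degree <= d, together with 0 *)
Definition Pdeg (F : ringType) (n d : nat) (f : {mpoly F[n]}) : Prop :=
  (msize f <= d.+1)%N.

Definition Pdelta (F : finFieldType) (n : nat) (K : 'I_n -> {set F})
  (delta : nat) (s : 'I_n) (d : nat) (f : {mpoly F[n]}) : Prop :=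
  Pdeg d f /\ (f = 0 \/ (degX s f < #|K s| - delta + 1)%N).

Definition code (F : finFieldType) (n : nat) (K : 'I_n -> {set F})
  (P : {mpoly F[n]} -> Prop) (c : 'rV[F]_#|grid K|) : Prop :=
  exists f, P f /\ Psi K f = c.

Definition min_dist (F : fieldType) (m : nat) (C : 'rV[F]_m -> Prop) (w : nat)
  : Prop :=
  (exists c, [/\ C c, c != 0 & hweight c = w]) /\
  (forall c, C c -> c != 0 -> (w <= hweight c)%N).

(* Main.v *)
Require Import Defs.
From HB Require Import structures.
From mathcomp Require Import all_boot all_order all_algebra all_field.
From mathcomp Require Import mpoly.
From mathcomp Require Import zify.
Set Implicit Arguments. Unset Strict Implicit. Unset Printing Implicit Defensive.
Import Order.TTheory GRing.Theory.
From Stdlib Require Import Classical.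

Fixpoint Gb (l : seq nat) (d : nat) : nat :=
  if l is x :: l' then (if d <= x.-1 then (x - d) * \prod_(y <- l') y else Gb l' (d - x.-1))
  else 1.

Lemma Gb0 l : Gb l 0 = \prod_(y <- l) y.
Proof. by case: l => [|x l] /=; rewrite ?big_nil // big_cons subn0. Qed.

Lemma GbM l e x : all (fun y => x <= y.-1) l ->
  Gb l e <= x.+1 * Gb l (e + x).
Proof.
elim: l e => [|y l IH] e /=; first by rewrite muln1.
move=> /andP[xy xl].
case: (leqP (e + x) y.-1) => h1.
  have h2 : e <= y.-1 by lia.
  rewrite h2 mulnA leq_mul2r; apply/orP; right; nia.
case: (leqP e y.-1) => h2.
  case: l xl IH => [|z l] /= xl IH.
    rewrite !big_nil !muln1; lia.
  move/andP: xl => [xz _].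
  have h3 : e + x - y.-1 <= z.-1 by lia.
  rewrite h3 big_cons mulnA mulnA leq_mul2r; apply/orP; right; nia.
have -> : e + x - y.-1 = (e - y.-1) + x by lia.
exact: IH.
Qed.

Lemma GbC (idx : seq nat) (a u : nat -> nat) d :
  pairwise (fun i j => a i <= a j) idx -> all (fun i => 0 < a i) idx ->
  all (fun i => u i <= (a i).-1) idx -> \sum_(i <- idx) u i <= d ->
  Gb (map a idx) d <= \prod_(i <- idx) (a i - u i).
Proof.
elim: idx d => [|i idx IH] d /=; first by move=> *; rewrite big_nil.
move=> /andP[hi hp] /andP[ai0 ap] /andP[ui up].
rewrite !big_cons => hs.
have hs' : \sum_(j <- idx) u j <= d - u i by lia.
have IH' := IH (d - u i) hp ap up hs'.
case: (leqP d (a i).-1) => h1.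
  case: idx hi hp ap up hs hs' IH IH' => [|j idx] /= hi hp ap up hs hs' IH IH'.
    rewrite !big_nil !muln1; lia.
  move/andP: hi => [hij _]; move/andP: ap => [aj0 _].
  have h3 : d - u i <= (a j).-1 by lia.
  move: IH'; rewrite h3 => IH'.
  apply: (leq_trans _ (leq_mul (leqnn (a i - u i)) IH')).
  rewrite big_cons mulnA mulnA leq_mul2r; apply/orP; right; nia.
have hx : all (fun y => (a i).-1 - u i <= y.-1) (map a idx).
  rewrite all_map; apply/allP => j jin /=.
  move/allP: hi => /(_ j jin) /= hj; lia.
apply: (leq_trans (GbM (d - (a i).-1) hx)).
have -> : d - (a i).-1 + ((a i).-1 - u i) = d - u i by lia.
have -> : ((a i).-1 - u i).+1 = a i - u i by lia.
exact: leq_mul (leqnn _) IH'.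
Qed.

Lemma Gbcat p q e : all (leq 2) p ->
  Gb (p ++ q) (\sum_(y <- p) y.-1 + e) = Gb q e.
Proof.
elim: p => [|y p IH] /=; first by rewrite big_nil.
move=> /andP[y2 p2]; rewrite big_cons.
case: (leqP (y.-1 + \sum_(j <- p) j.-1 + e) y.-1) => h.
  have hp : \sum_(j <- p) j.-1 = 0 by lia.
  have he : e = 0 by lia.
  case: p p2 IH hp h => [|z p] /= p2 IH hp h.
    by rewrite he Gb0; lia.
  rewrite big_cons in hp; move/andP: p2 => [z2 _]; lia.
rewrite -IH //; congr Gb; lia.
Qed.
Lemma arA x x' B : 1 <= x' <= x -> x + 2 <= B -> (x - x' + 1) * B < (x+1) * (B - x').
Proof.
move=> /andP[h1 h2] h3.
have [e he] : exists e, x = x' + e by exists (x - x'); lia.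
have [c hc] : exists c, B = x + 2 + c by exists (B - (x + 2)); lia.
subst x B.
have -> : x' + e - x' + 1 = e + 1 by lia.
have -> : x' + e + 2 + c - x' = e + 2 + c by lia.
nia.
Qed.
Lemma arB y v l B : v < l -> l < y -> y < B -> (y - l) * B < (y - v) * (B - (l - v)).
Proof.
move=> h1 h2 h3.
have [e he] : exists e, l = v + 1 + e by exists (l - v - 1); lia.
have [f hf] : exists f, y = l + 1 + f by exists (y - l - 1); lia.
have [c hc] : exists c, B = y + 1 + c by exists (B - y - 1); lia.
subst B y l.
have -> : v + 1 + e + 1 + f - (v + 1 + e) = f + 1 by lia.
have -> : v + 1 + e + 1 + f - v = e + f + 2 by lia.
have -> : v + 1 + e + 1 + f + 1 + c - (v + 1 + e - v) = v + f + c + 2 by lia.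
nia.
Qed.
Lemma W0 (a : nat -> nat) n k l : k < n ->
  \prod_(0 <= i < n) (if i < k then 1 else if i == k then a k - l else a i)
  = (a k - l) * \prod_(i <- iota k.+1 (n - k.+1)) a i.
Proof.
move=> kn.
have iotan : iota 0 n = iota 0 k ++ k :: iota k.+1 (n - k.+1).
  have {1}-> : n = k + (1 + (n - k.+1)) by lia.
  by rewrite iotaD iotaD add0n addn1.
rewrite /index_iota subn0 iotan big_cat big_cons.
rewrite big1_seq; last by move=> i /andP[_]; rewrite mem_iota => /andP[_ h]; rewrite h.
rewrite ltnn eqxx /= mul1n; congr (_ * _).
apply: eq_big_seq => i; rewrite mem_iota => /andP[h1 _].
by rewrite ltnNge ltnW //= (gtn_eqF h1).
Qed.

Lemma all_pos_prod (r : seq nat) (a : nat -> nat) :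
  all (fun i => 0 < a i) r -> 0 < \prod_(i <- r) a i.
Proof.
elim: r => [|i r IH] /=; first by rewrite big_nil.
by move=> /andP[h1 h2]; rewrite big_cons muln_gt0 h1 IH.
Qed.

Lemma num_main (a u : nat -> nat) n k s l delta :
  (forall i j, i <= j -> j < n -> a i <= a j) -> (forall i, i < n -> 2 <= a i) ->
  k < n -> s < n -> 0 < l -> l <= (a k).-1 -> 2 <= delta -> delta <= a s ->
  ~ (k.+1 < n /\ a k.+1 <= a s) ->
  ~ [/\ a s <= a k, a k - l <= a s & a s - (a k - l) < a s - delta + 1] ->
  (forall i, i < n -> u i <= (a i).-1) ->
  \sum_(0 <= i < n) u i <= \sum_(0 <= i < k) (a i).-1 + l ->
  u s <= a s - delta ->
  \prod_(0 <= i < n) (if i < k then 1 else if i == k then a k - l else a i)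
   < \prod_(0 <= i < n) (a i - u i).
Proof.
move=> amono a2 kn sn l0 lk d2 ds ni nii ub hsum us.
have sk : s <= k.
  rewrite leqNgt; apply/negP => ks; apply: ni; split; first by lia.
  by apply: amono => //; lia.
rewrite W0 //.
set P := \prod_(i <- iota k.+1 (n - k.+1)) a i.
have Ppos : 0 < P.
  apply: all_pos_prod; apply/allP => i; rewrite mem_iota => /andP[_ h].
  have := a2 i; lia.
set idx := [seq i <- iota 0 n | i != s].
have sin : s \in iota 0 n by rewrite mem_iota.
have hprod : \prod_(0 <= i < n) (a i - u i) = (a s - u s) * \prod_(i <- idx) (a i - u i).
  by rewrite /index_iota subn0 (bigD1_seq s) ?iota_uniq // big_filter.
have hsum2 : \sum_(i <- idx) u i <= \sum_(0 <= i < k) (a i).-1 + l - u s.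
  rewrite /idx big_filter.
  move: hsum; rewrite /index_iota !subn0 (bigD1_seq s) ?iota_uniq //=; lia.
have idxall : all (fun i => i < n) idx.
  by apply/allP => i; rewrite mem_filter mem_iota => /andP[_ /andP[_]].
have hG := GbC (a := a) (u := u) (idx := idx) _ _ _ hsum2.
have hG' : Gb [seq a i | i <- idx] (\sum_(0 <= i < k) (a i).-1 + l - u s)
     <= \prod_(i <- idx) (a i - u i).
  apply: hG.
  - apply: pairwise_filter.
    apply: (sub_in_pairwise (P := fun i => i < n) (r := ltn)); last first.
      by rewrite -sorted_pairwise ?iota_ltn_sorted //; apply: ltn_trans.
      by apply/allP => i; rewrite mem_iota.
    by move=> i j hi hj /= hij; apply: amono => //; lia.
  - by apply/allP => i /(allP idxall) /a2; lia.
  - by apply/allP => i /(allP idxall) /ub.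
rewrite hprod.
apply: (leq_trans _ (leq_mul (leqnn (a s - u s)) hG')).
have Pk : forall j, j < k -> 2 <= a j by move=> j jk; apply: a2; lia.
have iotan : iota 0 n = iota 0 k ++ k :: iota k.+1 (n - k.+1).
  have {1}-> : n = k + (1 + (n - k.+1)) by lia.
  by rewrite iotaD iotaD add0n addn1.
have restne : all (fun i => i != s) (iota k.+1 (n - k.+1)).
  by apply/allP => i; rewrite mem_iota => /andP[h _]; apply/eqP => his; lia.
have rest2 : all (leq 2) [seq a i | i <- iota k.+1 (n - k.+1)].
  by rewrite all_map; apply/allP => i; rewrite mem_iota => /andP[_ h] /=; apply: a2; lia.
have Peq : P = \prod_(y <- [seq a i | i <- iota k.+1 (n - k.+1)]) y by rewrite big_map.
have restcase : (n = k.+1 /\ iota k.+1 (n - k.+1) = [::]) \/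
   (k.+1 < n /\ iota k.+1 (n - k.+1) = k.+1 :: iota k.+2 (n - k.+2)).
  case: (ltngtP k.+1 n) => h; [right | lia | left].
    split => //; have -> : n - k.+1 = (n - k.+2).+1 by lia. by [].
  by split => //; rewrite -h subnn.
have ak_s : a s <= a k by apply: amono.
case: (ltngtP s k) => [sltk||seqk]; [|lia|].
-
  have idxE : idx = [seq i <- iota 0 k | i != s] ++ k :: iota k.+1 (n - k.+1).
    rewrite /idx iotan filter_cat /= (negbTE (_ : k != s)); last by apply/eqP; lia.
    by rewrite (all_filterP restne).
  have sin2 : s \in iota 0 k by rewrite mem_iota.
  have sumE : \sum_(0 <= i < k) (a i).-1 = (a s).-1 + \sum_(y <- [seq a i | i <- [seq i <- iota 0 k | i != s]]) y.-1.
    by rewrite big_map /index_iota subn0 (bigD1_seq s) ?iota_uniq // big_filter.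
  set x := (a s).-1 - u s.
  have hx1 : 1 <= x by have := a2 s sn; lia.
  have -> : \sum_(0 <= i < k) (a i).-1 + l - u s =
     \sum_(y <- [seq a i | i <- [seq i <- iota 0 k | i != s]]) y.-1 + (x + l).
    by rewrite sumE /x; have := a2 s sn; lia.
  rewrite idxE map_cat Gbcat; last first.
    rewrite all_map; apply/allP => i; rewrite mem_filter mem_iota => /andP[_ /andP[_ h]] /=.
    by apply: Pk.
  rewrite /=.
  have hxs : a s - u s = x.+1 by have := a2 s sn; lia.
  rewrite hxs.
  case: (leqP (x + l) (a k).-1) => h1.
    rewrite -Peq.
    have hm : 2 <= a k - (x + l).
      apply/negP => /negP; rewrite -ltnNge => hm.
      apply: nii; split => //; lia.
    rewrite mulnA ltn_pmul2r //; nia.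
  case: restcase => [[nk ->]|[kn1 hi]] /=.
    rewrite /P; rewrite nk subnn /= big_nil !muln1; lia.
  rewrite hi /=.
  have hak1 : a s < a k.+1 by rewrite ltnNge; apply/negP => h; apply: ni.
  have h2 : x + l - (a k).-1 <= (a k.+1).-1 by lia.
  rewrite h2 Peq hi /= big_cons.
  rewrite mulnA mulnA ltn_pmul2r; last first.
    rewrite big_map; apply: all_pos_prod; apply/allP => i; rewrite mem_iota => /andP[_ h].
    have := a2 i; lia.
  have e1 : a k - l = x - (x + l - (a k).-1) + 1 by have := a2 k kn; lia.
  rewrite e1 -(addn1 x); apply: arA; first by apply/andP; split; lia.
  have := a2 s sn; lia.
-
  subst s.
  have idxE : idx = iota 0 k ++ iota k.+1 (n - k.+1).
    rewrite /idx iotan filter_cat /= eqxx (all_filterP restne).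
    rewrite (_ : [seq i <- iota 0 k | i != k] = iota 0 k) //.
    by apply/all_filterP/allP => i; rewrite mem_iota => /andP[_ h]; apply/eqP => e; lia.
  have ulk : u k < l.
    rewrite ltnNge; apply/negP => h; apply: nii; split => //; lia.
  have -> : \sum_(0 <= i < k) (a i).-1 + l - u k =
     \sum_(y <- [seq a i | i <- iota 0 k]) y.-1 + (l - u k).
    by rewrite big_map /index_iota subn0; lia.
  rewrite idxE map_cat Gbcat; last first.
    rewrite all_map; apply/allP => i; rewrite mem_iota => /andP[_ h] /=; by apply: Pk.
  case: restcase => [[nk ->]|[kn1 hi]] /=.
    rewrite /P nk subnn /= big_nil !muln1; have := a2 k kn; lia.
  rewrite hi /=.
  have hak1 : a k < a k.+1 by rewrite ltnNge; apply/negP => h; apply: ni.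
  have h2 : l - u k <= (a k.+1).-1 by lia.
  rewrite h2 /P hi big_cons big_map.
  rewrite mulnA mulnA ltn_pmul2r; last first.
    apply: all_pos_prod; apply/allP => i; rewrite mem_iota => /andP[_ h].
    have := a2 i; lia.
  apply: arB => //; have := a2 k kn; lia.
Qed.
Local Open Scope ring_scope.

Lemma subfield_card2 (F : finFieldType) (K : {set F}) : is_subfield K -> (2 <= #|K|)%N.
Proof.
case=> h0 h1 _ _ _.
rewrite (cardsD1 (0 : F)) h0 (cardsD1 (1 : F)) !inE h1 oner_eq0 /=.
by rewrite add1n ltnS.
Qed.

Lemma subfield_pow (F : finFieldType) (K : {set F}) : is_subfield K ->
  forall x, x \in K -> x ^+ #|K| = x.
Proof.
move=> hK x xK; have c2 := subfield_card2 hK.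
case: hK => h0 h1 hB hM hV.
have [->|xnz] := eqVneq x 0; first by rewrite expr0n; case: #|K| c2.
set Ks := K :\ 0.
have hc : #|K| = (#|Ks|).+1 by rewrite (cardsD1 (0 : F)) h0.
have e1 : \prod_(y in Ks) y = \prod_(y in Ks) (x * y).
  rewrite (reindex_inj (mulfI xnz)) /=; apply: eq_bigl => y.
  rewrite !inE mulf_eq0 negb_or xnz /=.
  apply/idP/idP => /andP[ynz yK]; rewrite ynz //=.
    by rewrite -(mulKf xnz y); apply: hM => //; apply: hV.
  by apply: hM.
have : \prod_(y in Ks) y != 0 by apply/prodf_neq0 => y; rewrite !inE => /andP[].
rewrite {1}e1 big_split /= prodr_const => hnz.
have hx : x ^+ #|Ks| = 1.
  apply/eqP; rewrite -subr_eq0; apply/eqP.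
  have : (x ^+ #|Ks| - 1) * \prod_(y in Ks) y = 0.
    have e2 : x ^+ #|Ks| * \prod_(y in Ks) y = \prod_(y in Ks) y.
      by rewrite {2}e1 big_split /= prodr_const.
    by rewrite mulrBl mul1r e2 subrr.
  move/eqP; rewrite mulf_eq0 => /orP[/eqP //|/eqP h].
  by rewrite h mulr0 eqxx in hnz.
by rewrite hc exprS hx mulr1.
Qed.

Definition red (a e : nat) : nat := if e is 0 then 0 else ((e.-1 %% a.-1).+1)%N.

Lemma red_le a e : (red a e <= e)%N.
Proof. by case: e => //= e; rewrite ltnS leq_mod. Qed.

Lemma red_lt a e : (2 <= a)%N -> (red a e < a)%N.
Proof.
move=> a2; case: e => /= [|e]; first lia.
have : (e %% a.-1 < a.-1)%N by rewrite ltn_pmod //; lia.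
lia.
Qed.

Lemma pow_red (F : ringType) (a : nat) (y : F) : (2 <= a)%N -> y ^+ a = y ->
  forall e, y ^+ e = y ^+ red a e.
Proof.
move=> a2 ya [|e] //=.
have step : forall t, y ^+ (t.+1 + a.-1) = y ^+ t.+1.
  by move=> t; rewrite addSnnS prednK ?exprD ?ya -?exprSr //; lia.
rewrite {1}(divn_eq e a.-1); elim: (e %/ a.-1)%N => [|q IH]; first by rewrite mul0n add0n.
by rewrite mulSn -addnA addnC -addSn step.
Qed.
Local Open Scope ring_scope.

Definition evT (F : ringType) n (L : seq (F * {ffun 'I_n -> nat})) (x : 'I_n -> F) : F :=
  \sum_(p <- L) p.1 * \prod_(i < n) x i ^+ p.2 i.

Definition upd (F : Type) n (x : {ffun 'I_n -> F}) (j : 'I_n) (y : F) : {ffun 'I_n -> F} :=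
  [ffun i => if i == j then y else x i].

Definition hT (F : ringType) n (L : seq (F * {ffun 'I_n -> nat})) (j : 'I_n) (a t : nat) :=
  [seq ((p.1, [ffun i => if i == j then 0%N else p.2 i]) : F * {ffun 'I_n -> nat})
    | p : F * {ffun 'I_n -> nat} <- L & red a (p.2 j) == t].

Lemma card_fam (F : finType) n (A : 'I_n -> {set F}) :
  #|[set x : {ffun 'I_n -> F} | [forall i, x i \in A i]]| = (\prod_i #|A i|)%N.
Proof.
have -> : #|[set x : {ffun 'I_n -> F} | [forall i, x i \in A i]]| =
   #|family (fun i => mem (A i))|.
  apply: eq_card => x; rewrite inE; apply/forallP/familyP => h i; exact: h.
by rewrite card_family foldrE big_map big_enum.
Qed.

Lemma evT_nil (F : ringType) n (x : 'I_n -> F) : evT [::] x = 0.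
Proof. by rewrite /evT big_nil. Qed.

Lemma evT_indep (F : ringType) n L (j : 'I_n) (x x' : 'I_n -> F) :
  all (fun p : F * {ffun 'I_n -> nat} => p.2 j == 0%N) L ->
  (forall i, i != j -> x i = x' i) -> evT L x = evT L x'.
Proof.
move=> hL hx; apply: eq_big_seq => p pL; congr (_ * _); apply: eq_bigr => i _.
case: (eqVneq i j) => [->|h]; last by rewrite hx.
by rewrite (eqP (allP hL p pL)) !expr0.
Qed.

Lemma evT_split (F : comRingType) n (L : seq (F * {ffun 'I_n -> nat})) (j : 'I_n) a
  (x : 'I_n -> F) : (2 <= a)%N -> x j ^+ a = x j ->
  evT L x = \sum_(t < a) evT (hT L j a t) x * x j ^+ t.
Proof.
move=> a2 xa.
under eq_bigr => t _ do rewrite /evT big_map big_filter mulr_suml big_mkcond.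
rewrite exchange_big /=; apply: eq_bigr => p _.
rewrite (bigD1 (Ordinal (red_lt (p.2 j) a2))) //= eqxx.
rewrite [X in _ = _ + X]big1 => [|t ht]; last first.
  case: ifP => // /eqP h; exfalso; move/eqP: ht; apply; apply: val_inj => /=; by rewrite h.
rewrite addr0 -mulrA; congr (_ * _).
rewrite [LHS](bigD1 j) // [X in _ = X * _](bigD1 j) //= ffunE eqxx expr0 mul1r mulrC.
congr (_ * _).
  by apply: eq_bigr => i hi; rewrite ffunE (negbTE hi).
exact: pow_red.
Qed.

Lemma roots_bound (F : finFieldType) (Kj : {set F}) (E : nat -> F) ts (g : F -> F) :
  E ts != 0 -> (forall y, y \in Kj -> g y = \sum_(t < ts.+1) E t * y ^+ t) ->
  (#|Kj| - ts <= #|[set y in Kj | g y != 0%R]|)%N.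
Proof.
move=> Ets hg.
set p := \poly_(t < ts.+1) E t.
have sp : size p = ts.+1 by rewrite size_poly_eq.
have pnz : p != 0 by rewrite -size_poly_eq0 sp.
set R := [set y | root p y].
have hR : (#|Kj :&: R| <= ts)%N.
  rewrite cardE -ltnS -sp; apply: max_poly_roots => //; last exact: enum_uniq.
  by apply/allP => y; rewrite mem_enum !inE => /andP[].
have -> : [set y in Kj | g y != 0] = Kj :\: R.
  apply/setP => y; rewrite !inE; case yK: (y \in Kj); rewrite ?andbF //=.
  by rewrite andbT hg // /root horner_poly.
have := cardsID R Kj; lia.
Qed.

Lemma count_pairs (F : finFieldType) n (G : {set {ffun 'I_n -> F}}) (Kj : {set F})
  (j : 'I_n) (Sh SL : {set {ffun 'I_n -> F}}) (P : {ffun 'I_n -> F} -> bool) c :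
  Sh \subset G -> (forall x y, x \in G -> y \in Kj -> upd x j y \in G) ->
  (forall x, x \in G -> x j \in Kj) ->
  SL = [set z in G | P z] ->
  (forall x, x \in Sh -> c <= #|[set y in Kj | P (upd x j y)]|)%N ->
  (c * #|Sh| <= #|SL| * #|Kj|)%N.
Proof.
move=> ShG updG xjK hSL hc.
set Q := [set q : {ffun 'I_n -> F} * F | (q.1 \in Sh) && ((q.2 \in Kj) && P (upd q.1 j q.2))].
have low : (c * #|Sh| <= #|Q|)%N.
  rewrite mulnC -sum_nat_const.
  apply: (@leq_trans (\sum_(x in Sh) #|[set y in Kj | P (upd x j y)]|));
    first by apply: leq_sum.
  rewrite -sum1_card (eq_bigl (fun q => (q.1 \in Sh) && ((q.2 \in Kj) && P (upd q.1 j q.2))));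
    last by move=> q; rewrite inE.
  rewrite -(pair_big_dep (fun x => x \in Sh) (fun x y => (y \in Kj) && P (upd x j y))
       (fun _ _ => 1%N)) /=.
  apply: leq_sum => x _; rewrite -sum1_card; apply: eq_leq; apply: eq_bigl => y.
  by rewrite inE.
set phi := fun q : {ffun 'I_n -> F} * F => (upd q.1 j q.2, q.1 j).
have phi_inj : injective phi.
  move=> [x y] [x' y'] h; have h1 := congr1 fst h; have h2 := congr1 snd h.
  rewrite /phi /= in h1 h2.
  have hy : y = y' by have := congr1 (fun f : {ffun 'I_n -> F} => f j) h1; rewrite !ffunE eqxx.
  congr pair => //; apply/ffunP => i.
  case: (eqVneq i j) => [->//|hij].
  by have := congr1 (fun f : {ffun 'I_n -> F} => f i) h1; rewrite !ffunE (negbTE hij).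
have up : (#|Q| <= #|SL| * #|Kj|)%N.
  rewrite -cardsX -(card_imset Q phi_inj); apply: subset_leq_card.
  apply/subsetP => z /imsetP[[x y] + ->]; rewrite !inE /= => /and3P[xS yK hP].
  have xG := subsetP ShG x xS.
  by rewrite hSL inE updG // hP xjK.
exact: leq_trans low up.
Qed.

Lemma grid_mem (F : finFieldType) n (K : 'I_n -> {set F}) (x : {ffun 'I_n -> F}) :
  (x \in grid K) = [forall i, x i \in K i].
Proof. by rewrite inE. Qed.

Lemma AF (F : finFieldType) n (K : 'I_n -> {set F}) :
  (forall i x, x \in K i -> x ^+ #|K i| = x) -> (forall i, 2 <= #|K i|)%N ->
  forall m, (m <= n)%N -> forall (L : seq (F * {ffun 'I_n -> nat})) d (B : 'I_n -> nat),
  all (fun p : F * {ffun 'I_n -> nat} => [forall i : 'I_n, (m <= i)%N ==> (p.2 i == 0%N)]) L ->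
  all (fun p : F * {ffun 'I_n -> nat} => (\sum_i p.2 i <= d)%N) L ->
  all (fun p : F * {ffun 'I_n -> nat} => [forall i, (p.2 i <= B i)%N]) L ->
  (exists2 x, x \in grid K & evT L x != 0) ->
  exists u : 'I_n -> nat, [/\ forall i, (u i <= (#|K i|).-1)%N, forall i, (u i <= B i)%N,
     forall i : 'I_n, (m <= i)%N -> u i = 0%N, (\sum_i u i <= d)%N &
     (\prod_i (#|K i| - u i) <= #|[set x in grid K | evT L x != 0%R]|)%N].
Proof.
move=> Kp K2; elim=> [|m IH] mn L d B hv hd hb [x0 x0G x0nz].
  exists (fun _ => 0%N); split => //.
  - by rewrite big1.
  - have hc : forall x, evT L x = \sum_(p <- L) p.1.
      move=> x; apply: eq_big_seq => p pL; rewrite big1 ?mulr1 // => i _.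
      move/allP: hv => /(_ p pL) /forallP /(_ i) /=.
      by move=> /eqP ->; rewrite expr0.
    under eq_bigr do rewrite subn0.
    rewrite -card_fam; apply: subset_leq_card; apply/subsetP => x xG.
    by rewrite inE; apply/andP; split; [exact: xG | rewrite hc -(hc x0)].
have mn' : (m < n)%N := mn.
set j : 'I_n := Ordinal mn'.
set a := #|K j|.
have a2 : (2 <= a)%N := K2 j.
have gridK : forall x i, x \in grid K -> x i \in K i.
  by move=> x i; rewrite grid_mem => /forallP.
have hsplit : forall x, x \in grid K ->
    evT L x = \sum_(t < a) evT (hT L j a t) x * x j ^+ t.
  move=> x xG; apply: evT_split => //; apply: Kp; exact: gridK.
have hmem : forall t q, q \in hT L j a t -> exists2 p, p \in L &
     (red a (p.2 j) = t /\ q = (p.1, [ffun i => if i == j then 0%N else p.2 i])).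
  move=> t q /mapP[p]; rewrite mem_filter => /andP[/eqP ht pL] ->.
  by exists p.
have hv' : forall t, all (fun p : F * {ffun 'I_n -> nat} =>
     [forall i : 'I_n, (m <= i)%N ==> (p.2 i == 0%N)]) (hT L j a t).
  move=> t; apply/allP => q /hmem [p pL [_ ->]]; apply/forallP => i /=; rewrite ffunE.
  case: (eqVneq i j) => [->|hij]; first by rewrite eqxx implybT.
  apply/implyP => mi /=.
  have mi' : (m.+1 <= i)%N.
    rewrite ltn_neqAle mi andbT; apply/eqP => e; case/eqP: hij; apply: val_inj => /=; by rewrite -e.
  by move/allP: hv => /(_ p pL) /forallP /(_ i); rewrite mi'.
have hj0 : forall t, all (fun p : F * {ffun 'I_n -> nat} => p.2 j == 0%N) (hT L j a t).
  by move=> t; apply/allP => q /hmem [p pL [_ ->]] /=; rewrite ffunE eqxx.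
have hd' : forall t, all (fun p : F * {ffun 'I_n -> nat} =>
     ((\sum_i p.2 i + t <= d)%N && (t <= B j)%N)) (hT L j a t).
  move=> t; apply/allP => q /hmem [p pL [ht ->]] /=.
  have hpd := allP hd p pL; have hpb := allP hb p pL.
  move/forallP: hpb => /(_ j) hpbj; rewrite /= in hpd hpbj.
  have := red_le a (p.2 j); rewrite ht => htp.
  rewrite (bigD1 j) //= ffunE eqxx add0n.
  rewrite (bigD1 j) //= in hpd.
  have -> : (\sum_(i < n | i != j) [ffun i0 => if i0 == j then 0%N else p.2 i0] i
      = \sum_(i < n | i != j) p.2 i)%N.
    by apply: eq_bigr => i hi; rewrite ffunE (negbTE hi).
  apply/andP; split; last exact: leq_trans htp hpbj.
  by apply: leq_trans hpd; rewrite addnC leq_add2r.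
have hb' : forall t, all (fun p : F * {ffun 'I_n -> nat} =>
     [forall i, (p.2 i <= B i)%N]) (hT L j a t).
  move=> t; apply/allP => q /hmem [p pL [_ ->]]; apply/forallP => i /=; rewrite ffunE.
  case: (eqVneq i j) => [_|_] //; exact: (forallP (allP hb p pL) i).
pose P t := (t < a)%N && [exists x in grid K, evT (hT L j a t) x != 0].
have exP : exists t, P t.
  case: (boolP [exists t : 'I_a, evT (hT L j a t) x0 != 0]) => [/existsP [t ht]|hn].
    exists t; rewrite /P ltn_ord /=; apply/existsP; exists x0; by rewrite x0G.
  rewrite negb_exists in hn; move/forallP: hn => hn.
  have := hsplit x0 x0G; rewrite big1 => [h0|t _]; first by rewrite h0 eqxx in x0nz.
  by rewrite (eqP (negbNE (hn t))) mul0r.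
have ubP : forall t, P t -> (t <= a)%N by move=> t /andP[/ltnW].
case: (ex_maxnP exP ubP) => ts /andP[tsa /existsP[x1 /andP[x1G x1nz]]] tsmax.
have zabove : forall t x, (ts < t)%N -> (t < a)%N -> x \in grid K -> evT (hT L j a t) x = 0.
  move=> t x h1 h2 xG; apply/eqP; apply: contraTT h1 => hnz; rewrite -leqNgt.
  by apply: tsmax; rewrite /P h2 /=; apply/existsP; exists x; rewrite xG.
have [q0 q0in] : exists q, q \in hT L j a ts.
  case E: (hT L j a ts) x1nz => [|q l]; first by rewrite evT_nil eqxx.
  by move=> _; exists q; rewrite inE eqxx.
have /andP[tsd tsB] := allP (hd' ts) q0 q0in.
have hdts : all (fun p : F * {ffun 'I_n -> nat} => (\sum_i p.2 i <= d - ts)%N) (hT L j a ts).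
  by apply/allP => q /(allP (hd' ts)) /andP[h _]; lia.
have [u' [u1 u2 u3 u4 u5]] := IH (ltnW mn) (hT L j a ts) (d - ts)%N B (hv' ts) hdts (hb' ts)
   (ex_intro2 _ _ x1 x1G x1nz).
exists (fun i => if i == j then ts else u' i); split.
- by move=> i; case: eqVneq => [->|_]; [rewrite -/a; lia | apply: u1].
- by move=> i; case: eqVneq => [->|_]; [exact: tsB | apply: u2].
- move=> i mi; case: eqVneq => [e|_]; last by apply: u3; lia.
  by move: mi; rewrite e /= ltnn.
- have u'j : u' j = 0%N by apply: u3.
  rewrite (bigD1 j) //= eqxx.
  rewrite (bigD1 j) //= u'j add0n in u4.
  under eq_bigr => i hi do rewrite (negbTE hi).
  lia.
have u'j : u' j = 0%N by apply: u3.
set NZL := [set x in grid K | evT L x != 0].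
set NZh := [set x in grid K | evT (hT L j a ts) x != 0].
have cp : ((a - ts) * #|NZh| <= #|NZL| * a)%N.
  apply: (count_pairs (G := grid K) (Kj := K j) (j := j) (P := fun z => evT L z != 0)).
  - by apply/subsetP => x; rewrite inE => /andP[].
  - move=> x y xG yK; rewrite grid_mem; apply/forallP => i; rewrite ffunE.
    by case: eqVneq => [->|_]; [exact: yK | exact: gridK].
  - by move=> x xG; exact: gridK.
  - by [].
  move=> x; rewrite inE => /andP[xG xnz].
  apply: (roots_bound (E := fun t => evT (hT L j a t) x)) => // y yK.
  have uG : upd x j y \in grid K.
    rewrite grid_mem; apply/forallP => i; rewrite ffunE.
    by case: eqVneq => [->|_]; [exact: yK | exact: gridK].
  rewrite (hsplit _ uG) ffunE eqxx.
  rewrite (eq_bigr (fun t : 'I_a => evT (hT L j a t) x * y ^+ t)); last first.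
    move=> t _; congr (_ * _); apply: (evT_indep (hj0 t)) => i hi.
    by rewrite ffunE (negbTE hi).
  rewrite (big_ord_widen a (fun t => evT (hT L j a t) x * y ^+ t) tsa).
  rewrite (bigID (fun t : 'I_a => (t < ts.+1)%N)) /= [X in _ + X = _]big1 ?addr0 // => t ht.
  by rewrite zabove ?mul0r // ltnNge.
have pe : (\prod_i (#|K i| - (if i == j then ts else u' i)) =
     (a - ts) * \prod_(i | i != j) (#|K i| - u' i))%N.
  rewrite (bigD1 j) //= eqxx; congr (_ * _)%N.
  by apply: eq_bigr => i hi; rewrite (negbTE hi).
have pe' : (\prod_i (#|K i| - u' i) = a * \prod_(i | i != j) (#|K i| - u' i))%N.
  by rewrite (bigD1 j) //= u'j subn0.
rewrite -(leq_pmul2l (_ : 0 < a)%N); last lia.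
rewrite pe mulnCA -pe' mulnC [X in (_ <= X)%N]mulnC.
apply: leq_trans cp.
by rewrite mulnC leq_mul2l u5 orbT.
Qed.

Definition termsOf (F : ringType) n (f : {mpoly F[n]}) : seq (F * {ffun 'I_n -> nat}) :=
  [seq ((f@_m, [ffun i => m i]) : F * {ffun 'I_n -> nat}) | m <- msupp f].

Lemma evT_terms (F : comRingType) n (f : {mpoly F[n]}) (x : 'I_n -> F) :
  evT (termsOf f) x = f.@[x].
Proof.
rewrite mevalE /evT big_map; apply: eq_bigr => m _ /=; congr (_ * _).
by apply: eq_bigr => i _; rewrite ffunE.
Qed.

Lemma weight_lb (F : finFieldType) n (K : 'I_n -> {set F}) :
  (forall i x, x \in K i -> x ^+ #|K i| = x) -> (forall i, 2 <= #|K i|)%N ->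
  forall (f : {mpoly F[n]}) d, (msize f <= d.+1)%N ->
  (exists2 x, x \in grid K & f.@[x] != 0) ->
  exists u : 'I_n -> nat, [/\ forall i, (u i <= (#|K i|).-1)%N,
     forall i, (u i <= degX i f)%N, (\sum_i u i <= d)%N &
     (\prod_i (#|K i| - u i) <= #|[set x in grid K | f.@[x] != 0%R]|)%N].
Proof.
move=> Kp K2 f d hf [x xG xnz].
have [||||u [u1 u2 _ u4 u5]] := AF Kp K2 (m:=n) (leqnn n) (L:=termsOf f) (d:=d) (B:=fun i => degX i f).
- by apply/allP => p _; apply/forallP => i; rewrite leqNgt ltn_ord.
- apply/allP => p /mapP[m mf ->] /=.
  have := msize_mdeg_lt mf; rewrite mdegE.
  rewrite (eq_bigr (fun i => m i)) => [h|i _]; last by rewrite ffunE.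
  by rewrite -ltnS; apply: leq_trans h hf.
- apply/allP => p /mapP[m mf ->]; apply/forallP => i /=; rewrite ffunE.
  by rewrite /degX; exact: (@leq_bigmax_seq _ _ xpredT (fun m : 'X_{1..n} => m i) m mf isT).
- by exists x => //; rewrite evT_terms.
exists u; split => //.
apply: (leq_trans u5); apply: eq_leq; apply: eq_card => y; rewrite !inE evT_terms.
by [].
Qed.

Lemma hweight_Psi (F : finFieldType) n (K : 'I_n -> {set F}) (f : {mpoly F[n]}) :
  hweight (Psi K f) = #|[set x in grid K | f.@[x] != 0%R]|.
Proof.
rewrite /hweight -(card_imset _ enum_val_inj); apply: eq_card => x.
apply/imsetP/idP.
  move=> [j hj ->]; move: hj; rewrite !inE /Psi !mxE => hj.
  by rewrite hj andbT -grid_mem; apply: enum_valP.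
rewrite inE => /andP[xG hx]; exists (enum_rank_in xG x); last by rewrite enum_rankK_in.
by rewrite !inE /Psi !mxE enum_rankK_in.
Qed.

Lemma rv_neq0 (F : fieldType) m (c : 'rV[F]_m) : c != 0 -> exists j, c 0 j != 0.
Proof.
move=> hc; case: (boolP [exists j, c 0 j != 0]) => [/existsP //|].
rewrite negb_exists => /forallP h; case/eqP: hc; apply/rowP => j.
by rewrite mxE; apply/eqP; rewrite -[_ == _]negbK h.
Qed.

Lemma msizeM_le' (F : idomainType) n (p q : {mpoly F[n]}) :
  (msize (p * q) <= (msize p + msize q).-1)%N.
Proof.
have [->|pn] := eqVneq p 0; first by rewrite mul0r msize0.
have [->|qn] := eqVneq q 0; first by rewrite mulr0 msize0.
by rewrite msizeM.
Qed.

Lemma msize_prod (F : idomainType) n (I : Type) (r : seq I) (P : pred I)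
  (G : I -> {mpoly F[n]}) :
  (msize (\prod_(i <- r | P i) G i) <= (\sum_(i <- r | P i) (msize (G i)).-1).+1)%N.
Proof.
elim: r => [|i r IH]; first by rewrite !big_nil msize1.
rewrite !big_cons; case: (P i) => //.
apply: (leq_trans (msizeM_le' _ _)); lia.
Qed.

Lemma msize_lin (F : idomainType) n (i : 'I_n) (c : F) :
  (msize ('X_i - c%:MP : {mpoly F[n]}) <= 2)%N.
Proof.
apply: (leq_trans (msizeD_le _ _)); rewrite msizeN msizeX mdeg1 geq_max leqnn /=.
by rewrite msizeC; case: (c != 0).
Qed.

Lemma Cword (F : finFieldType) n (K : 'I_n -> {set F}) (k : 'I_n) l :
  (forall i, (0:F) \in K i) -> (l <= #|K k|)%N ->
  exists f0 : {mpoly F[n]},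
    (msize f0 <= (\sum_(i < n | (i < k)%N) (#|K i| - 1) + l).+1)%N /\
    #|[set x in grid K | f0.@[x] != 0%R]| =
      (\prod_(i < n) (if (i < k)%N then 1 else if i == k then #|K k| - l else #|K i|))%N.
Proof.
move=> K0 lk.
set B0 := [set x in take l (enum (K k))].
have B0card : #|B0| = l.
  have u : uniq (take l (enum (K k))) by apply: take_uniq; exact: enum_uniq.
  by rewrite cardsE; move/card_uniqP: u => ->; rewrite size_takel // -cardE.
have B0K : B0 \subset K k.
  by apply/subsetP => x; rewrite inE => /mem_take; rewrite mem_enum.
pose inner (i : 'I_n) : {mpoly F[n]} := \prod_(c in K i :\ 0) ('X_i - c%:MP).
set g : {mpoly F[n]} := (\prod_(i < n | (i < k)%N) inner i) * \prod_(c in B0) ('X_k - c%:MP).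
exists g.
split.
  rewrite /g; apply: (leq_trans (msizeM_le' _ _)).
  have h1 : (msize (\prod_(i < n | (i < k)%N) inner i) <=
      (\sum_(i < n | (i < k)%N) (#|K i| - 1)).+1)%N.
    apply: (leq_trans (msize_prod _ _ _)); rewrite ltnS; apply: leq_sum => i _.
    have : (msize (inner i) <= #|K i :\ (0%R:F)|.+1)%N.
      apply: (leq_trans (msize_prod _ _ _)); rewrite ltnS -sum1_card.
      by apply: leq_sum => c _; rewrite -subn1 leq_subLR; exact: msize_lin i c.
    rewrite (cardsD1 (0:F) (K i)) K0 /= add1n subn1 /= => h.
    by rewrite -subn1 leq_subLR add1n.
  have h2 : (msize (\prod_(c in B0) ('X_k - c%:MP) : {mpoly F[n]}) <= l.+1)%N.
    apply: (leq_trans (msize_prod _ _ _)); rewrite ltnS -B0card -sum1_card.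
    by apply: leq_sum => c _; rewrite -subn1 leq_subLR; exact: msize_lin k c.
  rewrite -subn1 leq_subLR; apply: leq_trans (leq_add h1 h2) _; lia.
pose A (i : 'I_n) : {set F} :=
  if (i < k)%N then [set 0] else if i == k then K k :\: B0 else K i.
have evE : forall x : {ffun 'I_n -> F},
    g.@[x] =
    (\prod_(i < n | (i < k)%N) \prod_(c in K i :\ 0) (x i - c)) * \prod_(c in B0) (x k - c).
  move=> x; rewrite /g mevalM !(big_morph _ (mevalM x) (meval1 x)); congr (_ * _).
    apply: eq_bigr => i _; rewrite (big_morph _ (mevalM x) (meval1 x)).
    by apply: eq_bigr => c _; rewrite mevalB mevalXU mevalC.
  by apply: eq_bigr => c _; rewrite mevalB mevalXU mevalC.
have -> : [set x in grid K | g.@[x] != 0] =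
     [set x : {ffun 'I_n -> F} | [forall i, x i \in A i]].
  apply/setP => x; rewrite !inE evE mulf_eq0 negb_or.
  apply/idP/idP.
    move=> /and3P[/forallP xG h1 h2]; apply/forallP => i; rewrite /A.
    case: ifP => ik.
      rewrite inE; apply/negPn/negP => xi0; move/prodf_neq0: h1 => /(_ i ik).
      by move/prodf_neq0 => /(_ (x i)); rewrite !inE xi0 xG subrr eqxx => /(_ isT).
    case: (eqVneq i k) => [->|_]; last exact: xG.
    rewrite inE xG andbT; apply/negP => xB.
    by move/prodf_neq0: h2 => /(_ (x k) xB); rewrite subrr eqxx.
  move=> /forallP hA.
  have xG : forall i, x i \in K i.
    move=> i; have := hA i; rewrite /A; case: ifP => _.
      by rewrite inE => /eqP ->.
    by case: (eqVneq i k) => [->|_] //; rewrite inE => /andP[].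
  apply/and3P; split.
  - by apply/forallP.
  - apply/prodf_neq0 => i ik; apply/prodf_neq0 => c; rewrite !inE => /andP[cnz _].
    have := hA i; rewrite /A ik inE => /eqP ->; rewrite sub0r oppr_eq0 //.
  - apply/prodf_neq0 => c cB; have := hA k; rewrite /A ltnn eqxx inE => /andP[xB _].
    rewrite subr_eq0; apply/eqP => e; move: xB; by rewrite e cB.
rewrite card_fam; apply: eq_bigr => i _; rewrite /A.
case: ifP => _; first by rewrite cards1.
case: (eqVneq i k) => [_|_] //.
by rewrite cardsD (setIidPr B0K) B0card.
Qed.

Lemma Psi0 (F : finFieldType) n (K : 'I_n -> {set F}) : Psi K 0 = 0.
Proof. by apply/rowP => j; rewrite !mxE meval0. Qed.

Lemma hweight0 (F : finFieldType) m : hweight (0 : 'rV[F]_m) = 0%N.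
Proof. by rewrite /hweight; apply: eq_card0 => j; rewrite !inE !mxE eqxx. Qed.

Theorem mainTheorem10 (F : finFieldType) (n : nat) (K : 'I_n -> {set F})
  (delta : nat) (s k : 'I_n) (l d : nat) :
  (2 <= n)%N ->
  (forall i, is_subfield (K i)) ->
  (forall i j : 'I_n, (i <= j)%N -> K i \subset K j) ->
  (2 <= delta)%N ->
  (* r := d_s - delta + 1 >= 1 *) (delta <= #|K s|)%N ->
  (0 < l)%N -> (l <= #|K k| - 1)%N ->
  d = (\sum_(i < n | (i < k)%N) (#|K i| - 1) + l)%N ->
  (exists w, min_dist (@code F n K (Pdelta K delta s d)) w /\
             min_dist (@code F n K (@Pdeg F n d)) w) ->
  (exists j : 'I_n, val j = k.+1 /\ (#|K j| <= #|K s|)%N) \/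
  [/\ (#|K s| <= #|K k|)%N, (#|K k| - l <= #|K s|)%N &
      (#|K s| - (#|K k| - l) < #|K s| - delta + 1)%N].
Proof.
move=> n2 Ksf Knest d2 ds l0 lk hd [w [[[c [[f [hPf hfc]] hc0 hcw]] _] [_ hCmin]]].
case: (classic (exists j : 'I_n, val j = k.+1 /\ (#|K j| <= #|K s|)%N)) => [h|ni];
  first by left.
case: (classic [/\ (#|K s| <= #|K k|)%N, (#|K k| - l <= #|K s|)%N &
      (#|K s| - (#|K k| - l) < #|K s| - delta + 1)%N]) => [h|nii]; first by right.
exfalso.
have Kp : forall i x, x \in K i -> x ^+ #|K i| = x by move=> i; exact: subfield_pow.
have K2 : forall i, (2 <= #|K i|)%N by move=> i; exact: subfield_card2.
case: hPf => hfdeg hfs.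
have fnz : f != 0.
  by apply/eqP => f0; move: hc0; rewrite -hfc f0 Psi0 eqxx.
have hdegs : (degX s f < #|K s| - delta + 1)%N.
  by case: hfs => // f0; move: fnz; rewrite f0 eqxx.
have hex : exists2 x, x \in grid K & f.@[x] != 0.
  have [j hj] := rv_neq0 hc0.
  exists (enum_val j); first exact: enum_valP.
  by move: hj; rewrite -hfc /Psi mxE.
have [u [u1 u2 u4 u5]] := weight_lb Kp K2 hfdeg hex.
rewrite -hweight_Psi hfc hcw in u5.
have K0 : forall i, (0:F) \in K i by move=> i; case: (Ksf i).
have lk' : (l <= #|K k|)%N by have := K2 k; lia.
have [f0 [hf0deg hf0cnt]] := Cword K0 lk'.
rewrite -hd in hf0deg.
have cntpos : (0 < \prod_(i < n) (if (i < k)%N then 1 else if i == k then #|K k| - l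
     else #|K i|))%N.
  apply: prodn_gt0 => i; case: ifP => // _; case: ifP => _; have := K2 i; have := K2 k; lia.
have f0nz : Psi K f0 != 0.
  apply/eqP => h0; have := hweight_Psi K f0; rewrite h0 hweight0 hf0cnt => e.
  by move: cntpos; rewrite -e.
have wle := hCmin (Psi K f0) (ex_intro _ f0 (conj hf0deg erefl)) f0nz.
rewrite hweight_Psi hf0cnt in wle.
pose a := fun i : nat => #|K (insubd k i)|.
pose u' := fun i : nat => u (insubd k i).
have amono : forall i j, (i <= j)%N -> (j < n)%N -> (a i <= a j)%N.
  move=> i j ij jn; rewrite /a; apply: subset_leq_card; apply: Knest.
  by rewrite !val_insubd jn (leq_ltn_trans ij jn).
have a2' : forall i, (i < n)%N -> (2 <= a i)%N by move=> i _; exact: K2.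
have ak : a k = #|K k| by rewrite /a valKd.
have as_ : a s = #|K s| by rewrite /a valKd.
have hsum : (\sum_(0 <= i < n) u' i <= \sum_(0 <= i < k) (a i).-1 + l)%N.
  have -> : (\sum_(0 <= i < n) u' i = \sum_i u i)%N.
    by rewrite big_mkord; apply: eq_bigr => i _; rewrite /u' valKd.
  have -> : (\sum_(0 <= i < k) (a i).-1 = \sum_(i < n | (i < k)%N) (#|K i| - 1))%N.
    rewrite (big_nat_widen 0 k n) ?(ltnW (ltn_ord k)) // big_mkord.
    by apply: eq_bigr => i _; rewrite /a valKd subn1.
  by rewrite -hd.
have ni' : ~ (k.+1 < n /\ a k.+1 <= a s)%N.
  move=> [kn h]; apply: ni; exists (Ordinal kn); split => //.
  have e : insubd k k.+1 = Ordinal kn by apply: val_inj; rewrite val_insubd kn.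
  by move: h; rewrite /a e valKd.
have nii' : ~ [/\ a s <= a k, a k - l <= a s & a s - (a k - l) < a s - delta + 1]%N.
  by rewrite ak as_.
have ub : forall i, (i < n)%N -> (u' i <= (a i).-1)%N by move=> i _; exact: u1.
have us : (u' s <= a s - delta)%N by rewrite /u' as_ valKd; have := u2 s; lia.
have lka : (l <= (a k).-1)%N by rewrite ak -subn1.
have dsa : (delta <= a s)%N by rewrite as_.
have hlt := num_main amono a2' (ltn_ord k) (ltn_ord s) l0 lka d2 dsa ni' nii' ub hsum us.
have e1 : (\prod_(0 <= i < n) (if (i < k)%N then 1 else if i == k then a k - l else a i) =
    \prod_(i < n) (if (i < k)%N then 1 else if i == k then #|K k| - l else #|K i|))%N.
  rewrite big_mkord; apply: eq_bigr => i _; rewrite ak /a valKd.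
  by rewrite val_eqE.
have e2 : (\prod_(0 <= i < n) (a i - u' i) = \prod_i (#|K i| - u i))%N.
  by rewrite big_mkord; apply: eq_bigr => i _; rewrite /a /u' valKd.
rewrite e1 e2 in hlt.
by have := leq_trans (leq_trans hlt u5) wle; rewrite ltnn.
Qed.
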